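(* Let $A$ be an $n\times n$ matrix with a designated set of large positions, and let $(X,Y)$ be a restriction with $m=|X|\ge1$ that is $q$-good for some $q<\frac{1}{4m}$. Then $(X,Y)$ has a $0$-strong line, i.e. a row $i\in X$ with $(i,j)$ large for all $j\in Y$, or a column $j\in Y$ with $(i,j)$ large for all $i\in X$.
   Context: Let $A=(a_{ij})_{i,j\in[n]}$ with a designated set $L\subseteq[n]\times[n]$ of large positions. A restriction is $(X,Y)$ with $X,Y\subseteq[n]$, $|X|=|Y|$; a generalized diagonal of $A[X,Y]$ is $\{(i,\sigma(i)):i\in X\}$ for a bijection $\sigma:X\to Y$, random meaning uniform $\sigma$; it is good if it contains exactly one large position; $(X,Y)$ is $q$-good if a random generalized diagonal is good with probability $\ge1-q$. *)

(* Defs.v *)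
From mathcomp Require Import all_boot all_order all_algebra.
Set Implicit Arguments. Unset Strict Implicit. Unset Printing Implicit Defensive.
Import Order.TTheory GRing.Theory Num.Theory.

(* Positions are pairs (i, j) : 'I_n * 'I_n; the set L of large positions is a
   {set 'I_n * 'I_n}.  A restriction is (X, Y) with #|X| = #|Y|. *)

Definition elemsX (n : nat) (X : {set 'I_n}) := {x : 'I_n | x \in X}.

(* Bijections sigma : X -> Y, encoded as finite functions on elements of X
   that are injective with values in Y (bijective as #|X| = #|Y|). *)
Definition bijections (n : nat) (X Y : {set 'I_n}) :
  {set {ffun elemsX X -> 'I_n}} :=
  [set s : {ffun elemsX X -> 'I_n} | injectiveb s && [forall x, s x \in Y]].

Definition good_diag (n : nat) (L : {set 'I_n * 'I_n}) (X : {set 'I_n})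
  (s : {ffun elemsX X -> 'I_n}) : bool :=
  #|[set x : elemsX X | (val x, s x) \in L]| == 1%N.

Definition prob_good (n : nat) (L : {set 'I_n * 'I_n}) (X Y : {set 'I_n}) : rat :=
  (#|[set s in bijections X Y | good_diag L s]|%:R / #|bijections X Y|%:R)%R.

Definition qgood (n : nat) (L : {set 'I_n * 'I_n}) (X Y : {set 'I_n}) (q : rat) : Prop :=
  #|X| = #|Y| /\ (1 - q <= prob_good L X Y)%R.

Definition has_0strong_line (n : nat) (L : {set 'I_n * 'I_n}) (X Y : {set 'I_n}) : Prop :=
  (exists2 i, i \in X & forall j, j \in Y -> (i, j) \in L) \/
  (exists2 j, j \in Y & forall i, i \in X -> (i, j) \in L).

(* Main.v *)
Require Import Defs.
From mathcomp Require Import all_boot all_order all_algebra.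
From mathcomp Require Import fingroup perm.
From mathcomp Require Import ring lra zify.
Import Order.TTheory GRing.Theory Num.Theory.
Set Implicit Arguments. Unset Strict Implicit. Unset Printing Implicit Defensive.
Set Warnings "-notation-overridden -ambiguous-paths".

Section Aux.
Variables (n : nat) (L : {set 'I_n * 'I_n}) (X Y : {set 'I_n}).
Hypothesis hXY : #|X| = #|Y|.
Local Notation T := (elemsX X).
Local Notation B := (bijections X Y).

Lemma bijP (s : {ffun T -> 'I_n}) :
  reflect (injective s /\ forall x, s x \in Y) (s \in B).
Proof.
rewrite inE; apply: (iffP andP) => [[/injectiveP h /forallP h2]|[h h2]]; split => //.
  by apply/injectiveP. by apply/forallP.
Qed.

Lemma bij_surj s y : s \in B -> y \in Y -> exists x, s x = y.
Proof.
move=> /bijP [inj inY] yY.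
have sub : [set s x | x : T] \subset Y.
  by apply/subsetP => z /imsetP [x _ ->].
have := subset_leqif_card sub.
rewrite card_imset // card_sig -hXY.
rewrite (_ : #|[pred x | x \in X]| = #|X|); last exact: eq_card.
case=> _; rewrite eqxx => /esym /subsetP /(_ _ yY) /imsetP [x _ ->].
by exists x.
Qed.

Definition Fa (ea : T) (j : 'I_n) := [set s in B | s ea == j].

Lemma Fa_le ea j j' : j \in Y -> j' \in Y -> #|Fa ea j'| <= #|Fa ea j|.
Proof.
move=> jY j'Y.
pose f (s : {ffun T -> 'I_n}) := [ffun z => tperm j j' (s z)].
have finj : injective f.
  move=> s1 s2 /ffunP h; apply/ffunP => z; have := h z; rewrite !ffunE.
  exact: (can_inj (tpermK j j')).
rewrite -(card_imset (Fa ea j') finj); apply: subset_leq_card.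
apply/subsetP => t /imsetP [s + ->]; rewrite inE => /andP [/bijP [inj inY] /eqP e].
rewrite inE; apply/andP; split.
  apply/bijP; split.
    move=> z1 z2; rewrite !ffunE => /(can_inj (tpermK j j')); exact: inj.
  move=> z; rewrite ffunE; have := inY z; case: tpermP => // -> //.
by rewrite ffunE e tpermR.
Qed.

Lemma cardB_le ea j : j \in Y -> #|B| <= #|Y| * #|Fa ea j|.
Proof.
move=> jY.
rewrite -sum1_card (partition_big (fun s : {ffun T -> 'I_n} => s ea) (mem Y)).
  rewrite -sum_nat_const; apply: leq_sum => j' j'Y.
  have h := Fa_le ea jY (j'Y : j' \in Y).
  apply: leq_trans h; rewrite -sum1_card.
  rewrite leq_eqVlt; apply/orP; left; apply/eqP; apply: eq_bigl => s; rewrite [in RHS]inE.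
  by [].
by move=> s /bijP [_ ]; apply.
Qed.


Definition Gd := [set s in B | good_diag L s].
Definition Bad := B :\: Gd.
Definition cmp (s : {ffun T -> 'I_n}) (p : T -> T) := [ffun z => s (p z)].

Lemma cmp_bij s p : s \in B -> injective p -> cmp s p \in B.
Proof.
move=> /bijP [inj inY] pinj; apply/bijP; split.
  by move=> z1 z2; rewrite !ffunE => /inj /pinj.
by move=> z; rewrite ffunE.
Qed.

Lemma cmp_inj (s : {ffun T -> 'I_n}) (p : T -> T) : injective s -> injective p -> injective (cmp s p).
Proof. by move=> inj pinj z1 z2; rewrite !ffunE => /inj /pinj. Qed.

Lemma cmp_can (s1 s2 : {ffun T -> 'I_n}) (p p' : T -> T) : cancel p' p -> cmp s1 p = cmp s2 p -> s1 = s2.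
Proof.
move=> K /ffunP h; apply/ffunP => z; have := h (p' z); by rewrite !ffunE K.
Qed.

Lemma notgood0 (t : {ffun T -> 'I_n}) :
  (forall z, (val z, t z) \notin L) -> ~~ good_diag L t.
Proof.
move=> h; rewrite /good_diag.
have -> : [set x : T | (val x, t x) \in L] = set0.
  by apply/setP => z; rewrite !inE (negbTE (h z)).
by rewrite cards0.
Qed.

Lemma notgood2 (t : {ffun T -> 'I_n}) z1 z2 : z1 != z2 ->
  (val z1, t z1) \in L -> (val z2, t z2) \in L -> ~~ good_diag L t.
Proof.
move=> ne h1 h2; rewrite /good_diag.
have : [set z1; z2] \subset [set x : T | (val x, t x) \in L].
  by apply/subsetP => z; rewrite !inE => /orP [] /eqP ->.
move=> /subset_leq_card; rewrite cards2 ne.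
by case: #|_| => [|[|]].
Qed.

Lemma good_only (s : {ffun T -> 'I_n}) ea z :
  good_diag L s -> (val ea, s ea) \in L -> z != ea -> (val z, s z) \notin L.
Proof.
rewrite /good_diag => /cards1P [x0 e] hea ne; apply/negP => hz.
have : ea \in [set x : T | (val x, s x) \in L] by rewrite inE.
have : z \in [set x : T | (val x, s x) \in L] by rewrite inE.
rewrite e !inE => /eqP e1 /eqP e2; by rewrite e1 e2 eqxx in ne.
Qed.

Lemma inFa ea j s : (s \in Fa ea j) = (s \in B) && (s ea == j).
Proof. exact: in_set. Qed.
Lemma inGd s : (s \in Gd) = (s \in B) && good_diag L s.
Proof. exact: in_set. Qed.

Lemma bad_in t : t \in B -> ~~ good_diag L t -> t \in Bad.
Proof. by move=> tB ng; rewrite /Bad /Gd in_setD in_set tB (negbTE ng). Qed.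

Section Core.
Variables (ea ec : T) (j k : 'I_n).
Hypotheses (hL : (val ea, j) \in L) (hk : (val ea, k) \notin L) (kY : k \in Y)
  (hc : (val ec, j) \notin L).

Definition S0 := Fa ea j :&: Gd.
Definition pb (s : {ffun T -> 'I_n}) := odflt ea [pick b | s b == k].

Lemma pbP s : s \in B -> s (pb s) = k.
Proof.
move=> sB; rewrite /pb; case: pickP => [b /eqP //|] /=.
by have [x <-] := bij_surj sB kY => /(_ x); rewrite eqxx.
Qed.

Lemma S0P s : s \in S0 -> [/\ s \in B, injective s, s ea = j &
   forall z, z != ea -> (val z, s z) \notin L].
Proof.
rewrite in_setI inFa inGd => /andP [/andP [sB /eqP e] /andP [_ g]].
have /bijP [inj _] := sB; split => //.
move=> z ne; apply: (good_only (ea:=ea) g _ ne); by rewrite e.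
Qed.

Lemma jk : j != k.
Proof. by apply/eqP => e; move: hk; rewrite -e hL. Qed.

Lemma eac : ec != ea.
Proof. by apply/eqP => e; move: hc; rewrite e hL. Qed.

Definition P1 := [set s in S0 | (val (pb s), j) \notin L].
Definition P2 := [set s in S0 | (val ea, s ec) \notin L].
Definition P3 := [set s in S0 | ((val (pb s), j) \in L) && ((val ea, s ec) \in L)].

Definition m1 s := cmp s (tperm ea (pb s)).
Definition m2 s := cmp s (tperm ea ec).
Definition m3 s := cmp s (fun z => tperm ea (pb s) (tperm ea ec z)).

Lemma pb_ne s : s \in S0 -> pb s != ea.
Proof.
move=> /S0P [sB _ e _]; apply/eqP => h; have := pbP sB; rewrite h e => ejk.
by move: jk; rewrite ejk eqxx.
Qed.

Lemma inP1 s : (s \in P1) = (s \in S0) && ((val (pb s), j) \notin L).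
Proof. exact: in_set. Qed.
Lemma inP2 s : (s \in P2) = (s \in S0) && ((val ea, s ec) \notin L).
Proof. exact: in_set. Qed.
Lemma inP3 s : (s \in P3) = (s \in S0) && (((val (pb s), j) \in L) && ((val ea, s ec) \in L)).
Proof. exact: in_set. Qed.

Lemma m1b s : s \in S0 -> m1 s (pb s) = j.
Proof. by move=> /S0P [_ _ e _]; rewrite ffunE tpermR. Qed.

Lemma P1_le : #|P1| <= #|Bad|.
Proof.
have inj : {in P1 &, injective m1}.
  move=> s1 s2; rewrite !inP1 => /andP [S1 _] /andP [S2 _] h.
  have [B1 i1 e1 _] := S0P S1.
  have hb : pb s1 = pb s2.
    have hi : injective (m1 s1) := cmp_inj i1 (can_inj (tpermK _ _)).
    by apply: hi; rewrite m1b // h m1b.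
  apply: (cmp_can (p' := tperm ea (pb s1)) (tpermK _ _)).
  by move: h; rewrite /m1 -hb.
rewrite -(card_in_imset inj); apply: subset_leq_card.
apply/subsetP => t /imsetP [s + ->]; rewrite inP1 => /andP [S hb].
have [sB si e go] := S0P S.
apply: bad_in; first exact: cmp_bij sB (can_inj (tpermK _ _)).
apply: notgood0 => z; rewrite ffunE.
case: tpermP => [->|->|/eqP ne1 /eqP ne2].
- by rewrite pbP.
- by rewrite e.
- exact: go.
Qed.

Lemma P2_le : #|P2| <= #|Bad|.
Proof.
have inj : {in P2 &, injective m2}.
  move=> s1 s2 _ _; exact: (cmp_can (tpermK _ _)).
rewrite -(card_in_imset inj); apply: subset_leq_card.
apply/subsetP => t /imsetP [s + ->]; rewrite inP2 => /andP [S hb].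
have [sB si e go] := S0P S.
apply: bad_in; first exact: cmp_bij sB (can_inj (tpermK _ _)).
apply: notgood0 => z; rewrite ffunE.
case: tpermP => [->|->|/eqP ne1 /eqP ne2].
- by [].
- by rewrite e.
- exact: go.
Qed.

Lemma P3_le : #|P3| <= #|Bad|.
Proof.
have pi s : injective (fun z => tperm ea (pb s) (tperm ea ec z)).
  by move=> z1 z2 /(can_inj (tpermK _ _)) /(can_inj (tpermK _ _)).
have pc s : cancel (fun z => tperm ea ec (tperm ea (pb s) z))
                   (fun z => tperm ea (pb s) (tperm ea ec z)).
  by move=> z /=; rewrite tpermK tpermK.
have m3b s : s \in P3 -> m3 s (pb s) = j.
  rewrite inP3 => /andP [S /andP [hb _]].
  have [_ _ e _] := S0P S; rewrite ffunE.
  have nb : pb s != ea := pb_ne S.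
  have nc : pb s != ec by apply/eqP => h; move: hc; rewrite -h hb.
  have t1 : tperm ea ec (pb s) = pb s by apply: tpermD; rewrite eq_sym.
  by rewrite t1 tpermR.
have inj : {in P3 &, injective m3}.
  move=> s1 s2 P1' P2' h.
  have [_ i1 _ _] := S0P (andP (etrans (esym (inP3 s1)) P1')).1.
  have hb : pb s1 = pb s2.
    have hi : injective (m3 s1) := cmp_inj i1 (pi s1).
    by apply: hi; rewrite m3b // h m3b.
  apply: (cmp_can (pc s1)).
  by move: h; rewrite /m3 -hb.
rewrite -(card_in_imset inj); apply: subset_leq_card.
apply/subsetP => t /imsetP [s sP ->].
have := sP; rewrite inP3 => /andP [S /andP [hb hac]].
have [sB si e go] := S0P S.
apply: bad_in; first exact: cmp_bij sB (pi s).
have nb : pb s != ea := pb_ne S.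
have nc : pb s != ec by apply/eqP => h; move: hc; rewrite -h hb.
apply: (notgood2 (z1 := ea) (z2 := pb s)); first by rewrite eq_sym.
  have t1 : tperm ea (pb s) ec = ec.
    by apply: tpermD; [rewrite eq_sym; exact: eac | exact: nc].
  by rewrite ffunE tpermL t1.
by rewrite m3b.
Qed.

Lemma Fa_le4 : #|Fa ea j| <= 4 * #|Bad|.
Proof.
have s3 : #|S0| <= 3 * #|Bad|.
  have sub : S0 \subset P1 :|: P2 :|: P3.
    apply/subsetP => s S; rewrite !in_setU inP1 inP2 inP3 S /=.
    by case: ((val (pb s), j) \in L); case: ((val ea, s ec) \in L).
  apply: leq_trans (subset_leq_card sub) _.
  apply: leq_trans (leq_card_setU _ _) _.
  apply: leq_trans (leq_add (leq_card_setU _ _) (leqnn _)) _.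
  have := P1_le; have := P2_le; have := P3_le; lia.
rewrite -(cardsID Gd (Fa ea j)).
have : #|Fa ea j :\: Gd| <= #|Bad|.
  apply: subset_leq_card; apply/subsetP => s.
  by rewrite !in_setD inFa => /andP [-> /andP [-> _]].
rewrite -/S0; lia.
Qed.

End Core.
End Aux.

Theorem lemma2p15 (R : Type) (n : nat) (A : 'M[R]_n) (L : {set 'I_n * 'I_n})
  (X Y : {set 'I_n}) (q : rat) :
  #|X| = #|Y| -> (1 <= #|X|)%N ->
  (q < 1 / (4 * #|X|%:R))%R ->
  qgood L X Y q ->
  has_0strong_line L X Y.
Proof.
move=> hXY hm hq [_ hp].
have Gsub : Gd L X Y \subset bijections X Y by apply/subsetP => s; rewrite inGd => /andP [].
have cBad : #|Bad L X Y| = #|bijections X Y| - #|Gd L X Y|.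
  by rewrite /Bad cardsD (setIidPr Gsub).
have hGB : #|Gd L X Y| <= #|bijections X Y| by exact: subset_leq_card.
have M1 : (1 <= (#|X|%:R : rat))%R by rewrite ler1n.
rewrite ltr_pdivlMr in hq; last by rewrite mulr_gt0 // ltr0n.
move: hp; rewrite /prob_good -/(Gd L X Y) => hp.
have key : forall (ea : elemsX X) (j : 'I_n), j \in Y -> 4 * #|Bad L X Y| < #|Fa Y ea j|.
  move=> ea j jY.
  have hB := cardB_le ea jY; rewrite -hXY in hB.
  case b0: (#|bijections X Y| == 0).
    exfalso; move: hp; rewrite (eqP b0) invr0 mulr0 => hp.
    suff : (1 < 1 :> rat)%R by rewrite ltxx.
    nra.
  rewrite ler_pdivlMr in hp; last by rewrite ltr0n lt0n b0.
  rewrite cBad -(ltr_nat rat) natrM natrB //.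
  move: hB; rewrite -(ler_nat rat) natrM => hB.
  have bpos : (0 < (#|bijections X Y|%:R : rat))%R by rewrite ltr0n lt0n b0.
  nra.
have [a0 a0X] : exists a, a \in X by apply/set0Pn; rewrite -card_gt0.
have [j0 j0Y] : exists j, j \in Y by apply/set0Pn; rewrite -card_gt0 -hXY.
case: (boolP [exists a : 'I_n, exists j : 'I_n, [&& a \in X, j \in Y & (a, j) \in L]]).
  move=> /existsP [a /existsP [j /and3P [aX jY hL]]].
  pose ea : elemsX X := exist _ a aX.
  case: (boolP [forall k, (k \in Y) ==> ((a, k) \in L)]) => [row|].
    left; exists a => // k kY; by move/forallP: row => /(_ k); rewrite kY.
  rewrite negb_forall => /existsP [k]; rewrite negb_imply => /andP [kY hk].
  case: (boolP [forall c, (c \in X) ==> ((c, j) \in L)]) => [col|].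
    right; exists j => // c cX; by move/forallP: col => /(_ c); rewrite cX.
  rewrite negb_forall => /existsP [c]; rewrite negb_imply => /andP [cX hc].
  pose ec : elemsX X := exist _ c cX.
  have h1 := @Fa_le4 n L X Y hXY ea ec j k hL hk kY hc.
  have h2 := key ea j jY.
  by have := leq_trans h2 h1; rewrite ltnn.
move=> none; exfalso.
have G0 : Gd L X Y = set0.
  apply/setP => s; rewrite inGd in_set0; apply/negbTE/negP => /andP [sB].
  rewrite /good_diag => /eqP h.
  have : 0 < #|[set x : elemsX X | (val x, s x) \in L]| by rewrite h.
  rewrite card_gt0 => /set0Pn [x]; rewrite inE => hx.
  move/negP: none; apply; apply/existsP; exists (val x); apply/existsP; exists (s x).
  have /bijP [_ inY] := sB.
  by rewrite (valP x) inY.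
have h2 := key (exist _ a0 a0X) j0 j0Y.
have h3 : #|Fa Y (exist _ a0 a0X) j0| <= #|bijections X Y|.
  apply: subset_leq_card; apply/subsetP => s; by rewrite inFa => /andP [].
move: cBad; rewrite G0 cards0 subn0 => cB.
move: (leq_trans h2 h3); rewrite cB; case: #|bijections X Y| => // b.
move=> h; clear -h; lia.
Qed.
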